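(* Assume $u_i=1$ for all $i$, $q_1\ge\dots\ge q_n$, and no pool size bound ($G=n$). If $T$ is the regime returned by var-Greedy, then $$\max_{T'\in\tilde{\mathcal T}^B}u(T')\le e\cdot u(T).$$
   Context: Individual $i\in[n]$ is healthy with probability $q_i\in[0,1]$, independently. For $S\subseteq[n]$, $q_S=\prod_{i\in S}q_i$ ($q_\emptyset=1$). A test is a set $t\subseteq[n]$; with unit utilities $u(t)=q_t|t|$. $\tilde{\mathcal T}^B$ is the set of tuples of $B$ pairwise disjoint tests, with welfare $u(T)=\sum_ju(t_j)$. var-Greedy: for $j=1,\dots,B$, start with $t_j=\emptyset$ and repeatedly consider the smallest-index individual $i$ not yet placed in any test; add $i$ to $t_j$ if $u(t_j\cup\{i\})\ge u(t_j)$ (equivalently $q_i\ge |t_j|/(|t_j|+1)$), otherwise close $t_j$ and move to test $j+1$ (also stop if no individuals remain). *)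

(* Defs.v *)
From HB Require Import structures.
From mathcomp Require Import all_boot all_order all_algebra.
From mathcomp Require Import reals sequences exp.
Set Implicit Arguments. Unset Strict Implicit. Unset Printing Implicit Defensive.
Import Order.TTheory GRing.Theory Num.Theory.
Local Open Scope ring_scope.

Section GroupTesting.
Variables (R : realType) (n : nat) (q : 'I_n -> R).

Definition qS (t : {set 'I_n}) : R := \prod_(i in t) q i.

(* unit utilities: u(t) = q_t * |t| *)
Definition util (t : {set 'I_n}) : R := qS t * #|t|%:R.

Definition welfare (B : nat) (T : 'I_B -> {set 'I_n}) : R := \sum_(j < B) util (T j).

Definition disjoint_tests (B : nat) (T : 'I_B -> {set 'I_n}) : Prop :=
  forall j k : 'I_B, j != k -> [disjoint T j & T k].

Definition qnat (k : nat) : R := if insub k is Some i then q i else 0.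

(* Greedy growth of one test: current next unplaced index k, current test size s.
   Individual k is added iff q_k >= s/(s+1), i.e. q_k * (s+1) >= s.
   Returns the index of the first individual NOT placed in this test
   (either the individual that caused closing, or n if none remain).
   The fuel m = n suffices since each step increases k and stops at n. *)
Fixpoint grow (m k s : nat) : nat :=
  match m with
  | 0 => k
  | m'.+1 =>
      if (k < n)%N && (s%:R <= qnat k * s.+1%:R) then grow m' k.+1 s.+1 else k
  end.

(* start index of the j-th test of var-Greedy (individuals are placed in index order) *)
Fixpoint gstart (j : nat) : nat :=
  match j with
  | 0 => 0%N
  | j'.+1 => grow n (gstart j') 0
  end.

Definition varGreedy (B : nat) : 'I_B -> {set 'I_n} :=
  fun j => [set i : 'I_n | (gstart j <= i < gstart j.+1)%N].

End GroupTesting.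
Arguments varGreedy {R n} q B _.

(* Main.v *)
Require Import Defs.
From HB Require Import structures.
From mathcomp Require Import all_boot all_order all_algebra.
From mathcomp Require Import reals sequences exp.
From mathcomp Require Import zify ring lra.
Import Order.TTheory GRing.Theory Num.Theory.
Local Open Scope ring_scope.

Section Aux.
Variables (R : realType) (n : nat) (q : 'I_n -> R).
Hypothesis hq : forall i, 0 <= q i <= 1.
Hypothesis hsorted : forall i j : 'I_n, (i <= j)%N -> q j <= q i.

Lemma geo_bound (r : R) (s L : nat) : 0 <= r <= 1 -> r * (s.+1)%:R <= s%:R ->
  (s + L)%:R * r ^+ L <= s%:R.
Proof.
move=> /andP[r0 r1] hr; elim: L => [|L IH]; first by rewrite addn0 expr0 mulr1.
apply: le_trans IH; rewrite exprS mulrA ler_wpM2r ?exprn_ge0 //.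
rewrite addnS mulrC -addn1 natrD natrD mulrDr.
have : r * L%:R <= L%:R by rewrite ler_piMl.
move: hr; rewrite -addn1 natrD mulrDr; lra.
Qed.

Lemma qS_ge0 (t : {set 'I_n}) : 0 <= qS q t.
Proof. by apply: prodr_ge0 => i _; case/andP: (hq i). Qed.

Lemma qS_le1 (t : {set 'I_n}) : qS q t <= 1.
Proof.
rewrite /qS; apply: prodr_ile1 => i _; exact: hq.
Qed.

Lemma qS_le_elem (t : {set 'I_n}) (x : 'I_n) : x \in t -> qS q t <= q x.
Proof.
move=> xt; rewrite /qS (big_setD1 x) //=.
rewrite ler_piMr //; first by case/andP: (hq x).
exact: qS_le1.
Qed.

Lemma set_geo (t : {set 'I_n}) (r : R) (s : nat) : 0 <= r <= 1 ->
  r * (s.+1)%:R <= s%:R -> (forall i, i \in t -> q i <= r) ->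
  (s + #|t|)%:R * qS q t <= s%:R.
Proof.
move=> hr hs ht; apply: le_trans (@geo_bound r s #|t| hr hs).
rewrite ler_wpM2l // /qS -prodr_const; apply: ler_prod => i it.
by rewrite ht // andbT; case/andP: (hq i).
Qed.

Lemma qnat_ord (i : 'I_n) : qnat q i = q i.
Proof. by rewrite /qnat valK. Qed.

Lemma qnat_out k : (n <= k)%N -> qnat q k = 0.
Proof. by move=> h; rewrite /qnat insubN // -leqNgt. Qed.

Lemma qnat_ge0 k : 0 <= qnat q k.
Proof. by rewrite /qnat; case: insubP => [i _ _|_] //; case/andP: (hq i). Qed.

Lemma qnat_le1 k : qnat q k <= 1.
Proof. by rewrite /qnat; case: insubP => [i _ _|_] //; case/andP: (hq i). Qed.

Lemma qnat_mono i j : (i <= j)%N -> qnat q j <= qnat q i.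
Proof.
move=> hij; case: (ltnP j n) => hj; last by rewrite qnat_out // qnat_ge0.
have hi : (i < n)%N by apply: leq_ltn_trans hj.
by rewrite -[i]/(nat_of_ord (Ordinal hi)) -[j]/(nat_of_ord (Ordinal hj)) !qnat_ord hsorted.
Qed.

Lemma grow_spec m k s : let r := grow q m k s in
 [/\ (k <= r)%N, ((k <= n) -> r <= n)%N,
   (forall i, (k <= i < r)%N -> (s + (i - k))%:R <= qnat q i * (s + (i-k)).+1%:R) &
   ((n <= k + m)%N -> (r < n)%N -> ~~ ((s + (r - k))%:R <= qnat q r * (s + (r-k)).+1%:R))].
Proof.
elim: m k s => [|m IH] k s /=.
  split => //; first by move=> i; rewrite ltnNge; case/andP=> ->.
  by move=> h1 h2; exfalso; lia.
case: ifP => [/andP[kn hc]|hc].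
  have [h1 h2 h3 h4] := IH k.+1 s.+1; split.
  - exact: ltnW.
  - by move=> _; apply: h2.
  - move=> i /andP[ki ir]; case: (eqVneq i k) => [->|ne].
      by rewrite subnn addn0.
    have := h3 i; rewrite (_ : (s.+1 + (i - k.+1))%N = (s + (i - k))%N); last by lia.
    by apply; apply/andP; split => //; lia.
  - move=> hm hr; have := h4 _ hr; rewrite (_ : (s.+1 + (_ - k.+1))%N = (s + (grow q m k.+1 s.+1 - k))%N); last by lia.
    by apply; lia.
split => //.
- by move=> i; rewrite ltnNge; case/andP=> ->.
- by move=> _ kn; rewrite subnn addn0; move: hc; rewrite kn /= => ->.
Qed.


Lemma e_bound (m : nat) (r : R) : 0 <= r -> m%:R <= r * m.+1%:R -> 1 <= expR 1 * r ^+ m.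
Proof.
move=> r0 hm; case: m hm => [|m] hm.
  rewrite expr0 mulr1; have := expR_ge1Dx (1 : R); lra.
set k := m.+1 in hm *.
have k0 : (0 : R) < k%:R by rewrite ltr0n.
have -> : expR (1:R) = expR (k%:R^-1) ^+ k by rewrite -expRM_natl mulfV // gt_eqF.
have h1 : (1 + k%:R^-1 : R) ^+ k <= expR (k%:R^-1) ^+ k.
  rewrite ler_pXn2r // ?nnegrE ?expR_ge0 ?expR_ge1Dx //.
  by rewrite addr_ge0 // invr_ge0 ltW.
apply: le_trans (ler_wpM2r (exprn_ge0 _ r0) h1).
rewrite -exprMn; apply: exprn_ege1.
rewrite mulrDl mul1r -[k%:R^-1 * r]mulrC.
have : k%:R <= r * k.+1%:R + 0 by rewrite addr0.
rewrite -addn1 natrD mulrDr mulr1.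
move=> h; rewrite -(ler_pM2l k0) mulr1 mulrDr [k%:R * (r / _)]mulrCA mulfV ?gt_eqF // mulr1.
by move: h; rewrite addr0 [r * _]mulrC.
Qed.

Notation a := (gstart q).

Lemma gs_le j : (a j <= n)%N.
Proof. elim: j => [|j IH] //=; by case: (grow_spec n (a j) 0) => _ h _ _; apply: h. Qed.

Lemma gs_step j : (a j <= a j.+1)%N.
Proof. by case: (grow_spec n (a j) 0). Qed.

Lemma gs_mono j j' : (j <= j')%N -> (a j <= a j')%N.
Proof. apply: (@homo_leq _ a leq) => //; [exact: leq_trans | exact: gs_step]. Qed.

Lemma gs_in j i : (a j <= i < a j.+1)%N -> (i - a j)%:R <= qnat q i * (i - a j).+1%:R.
Proof. by case: (grow_spec n (a j) 0) => _ _ h _ /h; rewrite add0n. Qed.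

Lemma gs_stop j : (a j.+1 < n)%N ->
  qnat q (a j.+1) * (a j.+1 - a j).+1%:R < (a j.+1 - a j)%:R.
Proof.
case: (grow_spec n (a j) 0) => _ _ _ h hl.
by have := h (leq_addl _ _) hl; rewrite add0n ltNge.
Qed.

Lemma gs_pos j : (a j < n)%N -> (a j < a j.+1)%N.
Proof.
move=> hj; rewrite ltn_neqAle gs_step andbT; apply/negP => /eqP he.
have := gs_stop j; rewrite -he hj subnn => /(_ isT).
by rewrite mulr1 ltNge qnat_ge0.
Qed.

Lemma card_range lo hi : (hi <= n)%N ->
  #|[set i : 'I_n | (lo <= i < hi)%N]| = (hi - lo)%N.
Proof.
elim: hi => [|hi IH] hn.
  rewrite (_ : [set _ | _] = set0) ?cards0 //; apply/setP=> i; by rewrite !inE ltn0 andbF.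
case: (leqP lo hi) => hl.
  rewrite (_ : [set i : 'I_n | (lo <= i < hi.+1)%N] = (Ordinal hn) |: [set i : 'I_n | (lo <= i < hi)%N]).
    rewrite cardsU1 IH; last exact: ltnW.
    rewrite inE /= ltnn andbF /=; lia.
  apply/setP => i; rewrite !inE -val_eqE /= ltnS (leq_eqVlt i).
  by case: (eqVneq (val i) hi) => [->|] //=; rewrite hl.
rewrite (_ : [set _ | _] = set0) ?cards0; first by lia.
apply/setP => i; rewrite !inE; apply/negP => /andP[h1 h2]; lia.
Qed.

Definition Gb j := [set i : 'I_n | (a j <= i < a j.+1)%N].

Lemma card_Gb j : #|Gb j| = (a j.+1 - a j)%N.
Proof. by rewrite card_range // gs_le. Qed.

Lemma greedy_block j : (a j.+1 - a j)%:R * qnat q (a j) <= expR 1 * util q (Gb j).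
Proof.
have u0 : 0 <= util q (Gb j) by rewrite /util mulr_ge0 ?qS_ge0.
case: (posnP (a j.+1 - a j)) => [->|hs]; first by rewrite mul0r mulr_ge0 ?expR_ge0.
have ajn : (a j < n)%N by apply: leq_trans (gs_le j.+1); lia.
pose x := Ordinal ajn.
have hlt : (a j < a j.+1)%N by lia.
have xG : x \in Gb j by rewrite /Gb inE; apply/andP; split; [exact: leqnn | exact: hlt].
set s := (a j.+1 - a j)%N.
set last := (a j.+1).-1.
have hlast : (s.-1)%:R <= qnat q last * s%:R.
  have := @gs_in j last; rewrite (_ : (last - a j)%N = s.-1); last by rewrite /last /s; lia.
  rewrite (_ : s.-1.+1 = s); last by lia.
  apply; rewrite /last; lia.
have hrest : qnat q last ^+ s.-1 <= qS q (Gb j :\ x).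
  have -> : s.-1 = #|Gb j :\ x| by have := cardsD1 x (Gb j); rewrite xG card_Gb -/s; lia.
  rewrite /qS -prodr_const; apply: ler_prod => i; rewrite !inE => /andP[ne /andP[h1 h2]].
  rewrite qnat_ge0 -(qnat_ord i); apply: qnat_mono; rewrite /last; lia.
have hss : s.-1.+1 = s by lia.
have he : 1 <= expR 1 * qnat q last ^+ s.-1 by apply: e_bound; [exact: qnat_ge0 | rewrite hss].
rewrite /util /qS (big_setD1 x xG) -/(qS q _) card_Gb -/s.
have -> : qnat q (a j) = q x by rewrite -qnat_ord.
set Q := qS q _ in hrest *.
have -> : expR 1 * (q x * Q * s%:R) = s%:R * q x * (expR 1 * Q) by ring.
rewrite ler_peMr ?mulr_ge0 //; first by case/andP: (hq x).
apply: le_trans he _; apply: ler_wpM2l; [exact: expR_ge0 | exact: hrest].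
Qed.

Lemma key_alg (p P L al S v M F : R) : 0 <= p -> p <= v -> v <= 1 -> 0 <= P -> 0 <= L ->
  (S + L) * P <= S -> 0 <= al -> al <= S -> 0 < S -> P * L <= F -> M <= F ->
  p * P * (al + L) <= F + al * (v - M / S).
Proof.
move=> p0 pv v1 P0 L0 hS a0 aS S0 hF hM.
have F0 : 0 <= F by apply: le_trans hF; rewrite mulr_ge0.
rewrite -(ler_pM2l S0).
have e1 : S * (p * P * (al + L)) = p * (al * ((S + L) * P) + (S - al) * (P * L)) by ring.
have e2 : S * (F + al * (v - M / S)) = S * F + al * v * S - al * M.
  by field; rewrite gt_eqF.
rewrite e1 e2.
have h1 : al * ((S + L) * P) <= al * S by rewrite ler_wpM2l.
have h2 : (S - al) * (P * L) <= (S - al) * F by rewrite ler_wpM2l // subr_ge0.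
have h3 : 0 <= al * ((S + L) * P) + (S - al) * (P * L).
  by rewrite addr_ge0 // mulr_ge0 // ?subr_ge0 // ?mulr_ge0 // addr_ge0 // ltW.
apply: le_trans (ler_wpM2r h3 pv) _.
have h4 : v * (al * ((S + L) * P) + (S - al) * (P * L)) <= v * (al * S) + (S - al) * F.
  rewrite mulrDr lerD // ?ler_wpM2l // ?(le_trans p0 pv) //.
  by apply: le_trans h2; rewrite ler_piMl // mulr_ge0 // ?subr_ge0 // mulr_ge0.
apply: le_trans h4 _.
have : al * M <= al * F by rewrite ler_wpM2l.
lra.
Qed.

Section Key.
Variables (B : nat) (M : R).
Hypothesis HM0 : 0 <= M.
Hypothesis HMv : forall j, (j < B)%N -> (0 < a j.+1 - a j)%N -> M <= (a j.+1 - a j)%:R * qnat q (a j).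
Hypothesis HMU : forall t : {set 'I_n}, (forall i, i \in t -> (a B <= i)%N) -> util q t <= M.

Definition cc j := qnat q (a j) - M / (a j.+1 - a j)%:R.
Definition phi (i : 'I_n) := \sum_(j < B) (if i \in Gb j then cc j else 0).

Lemma cc_ge0 j : (j < B)%N -> 0 <= cc j.
Proof.
move=> hj; rewrite /cc subr_ge0; case: (posnP (a j.+1 - a j)) => [->|hs].
  by rewrite invr0 mulr0 qnat_ge0.
by rewrite ler_pdivrMr ?ltr0n // mulrC HMv.
Qed.

Lemma phi_ge0 i : 0 <= phi i.
Proof. by apply: sumr_ge0 => j _; case: ifP => // _; apply: cc_ge0. Qed.

Lemma phi_in j i : (j < B)%N -> i \in Gb j -> phi i = cc j.
Proof.
move=> hj hi; rewrite /phi (bigD1 (Ordinal hj)) //= hi big1 ?addr0 // => k /negbTE hk.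
rewrite ifF //; move: hi; rewrite !inE => /andP[h1 h2]; apply/negP => /andP[h3 h4].
have : nat_of_ord k != j by move: hk; rewrite -val_eqE /= => ->.
case: (ltngtP k j) => // hkj _.
  by have := @gs_mono k.+1 j hkj; lia.
by have := @gs_mono j.+1 k hkj; lia.
Qed.

Lemma key m : (m <= B)%N -> forall t : {set 'I_n},
  (forall i, i \in t -> (a (B - m) <= i)%N) -> util q t <= M + \sum_(i in t) phi i.
Proof.
elim: m => [|m IH] hm t ht.
  rewrite subn0 in ht.
  apply: le_trans (HMU _ ht) _.
  by rewrite lerDl sumr_ge0 // => i _; apply: phi_ge0.
set j := (B - m.+1)%N in ht.
have hjB : (j < B)%N by rewrite /j; lia.
have hj1 : (B - m = j.+1)%N by rewrite /j; lia.
set A := t :&: Gb j; set t' := t :\: Gb j.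
have ht' : forall i, i \in t' -> (a (B - m) <= i)%N.
  move=> i; rewrite !inE negb_and -leqNgt => /andP[/orP[h|h] it].
    by have := ht i it; lia.
  by rewrite hj1.
have IHt := IH (ltnW hm) t' ht'.
rewrite (big_setID (Gb j)) /= -/A -/t'.
rewrite (eq_bigr (fun _ => cc j)); last by move=> i; rewrite inE => /andP[_ ]; apply: phi_in.
rewrite sumr_const.
have -> : util q t = qS q A * qS q t' * (#|A| + #|t'|)%:R.
  by rewrite /util /qS (big_setID (Gb j)) /= cardsID.
case: (posnP #|A|) => hA.
  have A0 : A = set0 by apply/eqP; rewrite -cards_eq0 hA.
  rewrite hA mulr0n add0r add0n A0 /qS big_set0 mul1r.
  exact: IHt.
have [x xA] : exists x, x \in A by apply/set0Pn; rewrite -card_gt0.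
have xG : x \in Gb j by move: xA; rewrite inE => /andP[].
set s := (a j.+1 - a j)%N.
have hAs : (#|A| <= s)%N by rewrite /s -card_Gb subset_leq_card // subsetIr.
have s0 : (0 < s)%N by lia.
set r := qnat q (a j.+1).
have hr : r * s.+1%:R <= s%:R.
  case: (ltnP (a j.+1) n) => h; first by apply: ltW; apply: gs_stop.
  by rewrite /r qnat_out // mul0r.
have hgeo := @set_geo t' r s (introT andP (conj (qnat_ge0 _) (qnat_le1 _))) hr.
have hgeo' : (s + #|t'|)%:R * qS q t' <= s%:R.
  apply: hgeo => i; rewrite -(qnat_ord i) => /ht'; rewrite hj1 => hi; exact: qnat_mono.
have hpv : qS q A <= qnat q (a j).
  apply: le_trans (qS_le_elem _ _ xA) _; rewrite -(qnat_ord x); apply: qnat_mono.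
  by move: xG; rewrite inE => /andP[].
have hF : qS q t' * #|t'|%:R <= M + \sum_(i in t') phi i by exact: IHt.
have hM : M <= M + \sum_(i in t') phi i by rewrite lerDl sumr_ge0 // => i _; apply: phi_ge0.
rewrite addrCA addrC /cc -[_ *+ #|A|]mulr_natl natrD.
apply: key_alg. all: try done. all: try exact: qS_ge0. all: try exact: qnat_le1. all: try exact: ler0n.
- by rewrite -natrD.
- by rewrite ler_nat.
- by rewrite ltr0n.
Qed.

End Key.

Lemma disj_sum (B : nat) (T : 'I_B -> {set 'I_n}) (f : 'I_n -> R) :
  disjoint_tests T -> (forall i, 0 <= f i) ->
  \sum_(k < B) \sum_(i in T k) f i <= \sum_i f i.
Proof.
move=> hT f0.
rewrite (eq_bigr (fun k => \sum_i (if i \in T k then f i else 0))); last first.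
  by move=> k _; rewrite big_mkcond.
rewrite exchange_big /=; apply: ler_sum => i _.
case: (pickP (fun k => i \in T k)) => [k0 hk0|none]; last first.
  by rewrite big1 // => k _; rewrite none.
rewrite (bigD1 k0) //= hk0 big1 ?addr0 // => k hk.
by rewrite (disjointFl (hT k k0 hk) hk0).
Qed.

Lemma uncovered_bound (B : nat) (j : nat) (t : {set 'I_n}) :
  (j < B)%N -> (a B < n)%N -> (forall i, i \in t -> (a B <= i)%N) ->
  util q t <= (a j.+1 - a j)%:R * qnat q (a j).
Proof.
move=> hj hB ht.
set s := (a j.+1 - a j)%N.
have hjB : (a j.+1 <= a B)%N by apply: gs_mono.
have s0 : (0 < s)%N.
  rewrite /s subn_gt0; apply: gs_pos; apply: leq_ltn_trans hB; apply: gs_mono; exact: ltnW.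
set p := qnat q (a B).
have hpv : p <= qnat q (a j) by apply: qnat_mono; apply: gs_mono; apply: ltnW.
have hp : p * s.+1%:R <= s%:R.
  apply: ltW; apply: le_lt_trans (gs_stop j _); last by apply: leq_ltn_trans hB.
  by rewrite ler_wpM2r // qnat_mono.
have v0 : 0 <= (a j.+1 - a j)%:R * qnat q (a j) by rewrite mulr_ge0 ?qnat_ge0.
case: (set_0Vmem t) => [->|[x xt]].
  by rewrite /util cards0 mulr0.
have hx : q x <= p by rewrite -(qnat_ord x); apply: qnat_mono; apply: ht.
have hgeo : (s + #|t :\ x|)%:R * qS q (t :\ x) <= s%:R.
  apply: (@set_geo _ p s) => //; first by rewrite /p qnat_ge0 qnat_le1.
  by move=> i; rewrite inE => /andP[_ it]; rewrite -(qnat_ord i); apply: qnat_mono; apply: ht.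
rewrite /util /qS (big_setD1 x xt) -/(qS q _) (cardsD1 x t) xt.
set L := #|t :\ x|; set Q := qS q (t :\ x).
have Q0 : 0 <= Q by apply: qS_ge0.
apply: (@le_trans _ _ (p * ((s + L)%:R * Q))).
  have -> : (true + L)%N = L.+1 by [].
  have h1 : q x * Q <= p * Q by rewrite ler_wpM2r.
  apply: le_trans (ler_wpM2r (ler0n _ _) h1) _.
  rewrite -mulrA ler_wpM2l ?qnat_ge0 // mulrC ler_wpM2r // ler_nat; lia.
apply: (@le_trans _ _ (p * s%:R)); first by rewrite ler_wpM2l // qnat_ge0.
by rewrite mulrC ler_wpM2l.
Qed.

End Aux.

Theorem mainTheorem13 (R : realType) (n B : nat) (q : 'I_n -> R)
  (hq : forall i, 0 <= q i <= 1)
  (hsorted : forall i j : 'I_n, (i <= j)%N -> q j <= q i)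
  (T' : 'I_B -> {set 'I_n}) (hT' : disjoint_tests T') :
  welfare q T' <= expR 1 * welfare q (varGreedy q B).
Proof.
case: B T' hT' => [|B] T' hT'.
  by rewrite /welfare !big_ord0 mulr0.
have [M [HM0 HMv HMU HMs]] : exists M : R, [/\ 0 <= M,
   (forall j, (j < B.+1)%N -> (0 < gstart q j.+1 - gstart q j)%N ->
      M <= (gstart q j.+1 - gstart q j)%:R * qnat q (gstart q j)),
   (forall t : {set 'I_n}, (forall i, i \in t -> (gstart q B.+1 <= i)%N) -> util q t <= M) &
   (forall j, (j < B.+1)%N -> (gstart q j.+1 - gstart q j = 0)%N -> M <= 0)].
  case: (ltnP (gstart q B.+1) n) => hB; last first.
    exists 0; split => //.
    - by move=> j _ _; rewrite mulr_ge0 ?qnat_ge0.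
    - move=> t ht; rewrite (_ : t = set0); first by rewrite /util cards0 mulr0.
      apply/setP => i; rewrite inE; apply/negP => /ht hi.
      by have := ltn_ord i; rewrite ltnNge (leq_trans hB hi).
  pose f := fun j : 'I_B.+1 => (gstart q j.+1 - gstart q j)%:R * qnat q (gstart q j).
  have [j0 _ hj0] := @arg_minP _ _ _ (ord0 : 'I_B.+1) xpredT f isT.
  exists (f j0); split.
  - by rewrite /f mulr_ge0 ?qnat_ge0.
  - by move=> j hj _; apply: (hj0 (Ordinal hj)).
  - by move=> t ht; exact: (@uncovered_bound R n q hq hsorted B.+1 j0 t (ltn_ord j0) hB ht).
  - move=> j hj hs; exfalso.
    suff : (gstart q j < gstart q j.+1)%N by rewrite -subn_gt0 hs ltnn.
    apply: (@gs_pos R n q hq j).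
    by apply: leq_ltn_trans hB; apply: gs_mono; apply: ltnW.
have hkey := @key R n q hq hsorted B.+1 M HM0 HMv HMU B.+1 (leqnn _).
rewrite /welfare.
apply: (@le_trans _ _ (\sum_(k < B.+1) (M + \sum_(i in T' k) phi R n q B.+1 M i))).
  apply: ler_sum => k _; apply: hkey => i _; rewrite subnn; exact: leq0n.
rewrite big_split /=.
apply: le_trans (lerD (lexx _) (@disj_sum R n B.+1 T' _ hT' (@phi_ge0 R n q hq B.+1 M HMv))) _.
rewrite /phi exchange_big /= -big_split /= mulr_sumr.
apply: ler_sum => j _.
rewrite -big_mkcond sumr_const.
apply: le_trans (@greedy_block R n q hq hsorted j).
rewrite card_Gb /cc.
case: (posnP (gstart q j.+1 - gstart q j)) => hs.
  by rewrite hs mulr0n mul0r addr0; apply: (HMs j (ltn_ord j) hs).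
have hS : (gstart q j.+1 - gstart q j)%:R != 0 :> R by rewrite pnatr_eq0 -lt0n.
rewrite -[(_ - _) *+ _]mulr_natr mulrBl divfK // addrC subrK mulrC.
by [].
Qed.
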